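(* Let $\tilde r\in(\tfrac14,\tfrac12)$, set $\mu=2\cos(2\pi\tilde r)$, and let $(\tilde x,\tilde y,\tilde z)\in\mathbb{C}^3$ be the trace coordinates of a representation in $\mathcal M^{\tilde r}_{0,4}$, so that $$\tilde x^2+\tilde y^2+\tilde z^2+\tilde x\tilde y\tilde z-2\mu^2(\tilde x+\tilde y+\tilde z)+4(\mu^2-1)+\mu^4=0,$$ and assume $(\tilde x-2)(\tilde y-2)(\tilde z-2)\neq0$. Then, with $r=2\tilde r-\tfrac12$, there exists $(x,y,z)\in\mathbb{C}^3$, unique up to signs, satisfying $x^2+y^2+z^2-xyz-2-2\cos(2\pi r)=0$ (i.e. the trace coordinates of an element of $\mathcal M^r_{1,1}$) and $$\tilde x=2-x^2,\quad \tilde y=2-y^2,\quad \tilde z=2-z^2.$$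
   Context: $\mathcal M^{\tilde r}_{0,4}$ is the space of conjugacy classes of representations $\pi_1(S_4,s_0)\to\mathrm{SL}(2,\mathbb{C})$ of the four-punctured sphere, generated by loops $\gamma_{p_1},\dots,\gamma_{p_4}$ around the punctures with $\gamma_{p_4}\gamma_{p_3}\gamma_{p_2}\gamma_{p_1}=1$, such that each $M_j=\rho(\gamma_{p_j})$ has trace $2\cos(2\pi\tilde r)$; its trace coordinates are $\tilde x=\mathrm{Tr}(M_2M_1)$, $\tilde y=\mathrm{Tr}(M_3M_2)$, $\tilde z=\mathrm{Tr}(M_3M_1)$. $\mathcal M^r_{1,1}$ is the space of conjugacy classes of representations of the free group $\pi_1(T^2\setminus\{o\})=\langle\gamma_x,\gamma_y\rangle$ of a once-punctured torus into $\mathrm{SL}(2,\mathbb{C})$ such that the image of the commutator $\gamma_y^{-1}\gamma_x^{-1}\gamma_y\gamma_x$ has trace $2\cos(2\pi r)$; its trace coordinates are $x=\mathrm{Tr}X$, $y=\mathrm{Tr}Y$, $z=\mathrm{Tr}(YX)$, with $X,Y$ the images of $\gamma_x,\gamma_y$. *)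

(* Defs.v *)
From mathcomp Require Import all_boot all_order all_algebra.
From mathcomp Require Import complex.
From mathcomp Require Import all_classical all_reals all_analysis.
Set Implicit Arguments. Unset Strict Implicit. Unset Printing Implicit Defensive.
Import Order.TTheory GRing.Theory Num.Theory.
Local Open Scope ring_scope.
Local Open Scope complex_scope.

(* 2 cos(2 pi t), the trace of a boundary/puncture holonomy *)
Definition tr_of (R : realType) (t : R) : R := 2 * cos (2 * pi * t).

Definition M04_eq (R : realType) (rt : R) (xt yt zt : R[i]) : Prop :=
  let mu : R[i] := (tr_of rt)%:C in
  xt ^+ 2 + yt ^+ 2 + zt ^+ 2 + xt * yt * zt
  - 2 * mu ^+ 2 * (xt + yt + zt) + 4 * (mu ^+ 2 - 1) + mu ^+ 4 = 0.

Definition M11_eq (R : realType) (r : R) (x y z : R[i]) : Prop :=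
  x ^+ 2 + y ^+ 2 + z ^+ 2 - x * y * z - 2 - (tr_of r)%:C = 0.

(* Main.v *)
Require Import Defs.
From mathcomp Require Import all_boot all_order all_algebra.
From mathcomp Require Import complex.
From mathcomp Require Import all_classical all_reals all_analysis.
From mathcomp Require Import ring.
Import Order.TTheory GRing.Theory Num.Theory.
Local Open Scope ring_scope.
Local Open Scope complex_scope.

Lemma trig (R : realType) (rt : R) : tr_of (2 * rt - 1 / 2) = 2 - (tr_of rt) ^+ 2.
Proof.
rewrite /tr_of.
have -> : 2 * pi * (2 * rt - 1 / 2) = (2 * pi * rt) *+ 2 - pi.
  by rewrite mulr2n; field.
rewrite cosB cos_mulr2n sin_mulr2n cospi sinpi; ring.
Qed.

Lemma sq_eq (R : realType) (a b : R[i]) : a ^+ 2 = b ^+ 2 ->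
  exists e : R[i], e ^+ 2 = 1 /\ a = e * b.
Proof.
move=> /eqP; rewrite -subr_eq0 subr_sqr mulf_eq0 => /orP[|] /eqP H.
  exists 1; split; first by rewrite expr1n.
  by rewrite mul1r; apply/eqP; rewrite -subr_eq0 H.
exists (-1); split; first by rewrite sqrrN expr1n.
by rewrite mulN1r; apply/eqP; rewrite -subr_eq0 opprK H.
Qed.

Theorem proposition3p10 (R : realType) (rt : R) (xt yt zt : R[i]) :
  1 / 4 < rt -> rt < 1 / 2 ->
  M04_eq rt xt yt zt ->
  (xt - 2) * (yt - 2) * (zt - 2) != 0 ->
  let r := 2 * rt - 1 / 2 in
  exists x y z : R[i],
    [/\ M11_eq r x y z, xt = 2 - x ^+ 2, yt = 2 - y ^+ 2 & zt = 2 - z ^+ 2] /\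
    (forall x' y' z' : R[i],
        M11_eq r x' y' z' -> xt = 2 - x' ^+ 2 -> yt = 2 - y' ^+ 2 ->
        zt = 2 - z' ^+ 2 ->
        exists e1 e2 e3 : R[i],
          [/\ e1 ^+ 2 = 1, e2 ^+ 2 = 1, e3 ^+ 2 = 1 &
              [/\ x' = e1 * x, y' = e2 * y & z' = e3 * z]]).
Proof.
move=> _ _ HM _ r.
rewrite /M11_eq /r trig.
move: HM; rewrite /M04_eq /=.
set mu := (tr_of rt)%:C => HM.
have Hmu : (2 - tr_of rt ^+ 2)%:C = 2 - mu ^+ 2 :> R[i].
  by rewrite /mu rmorphB rmorphXn /= rmorph_nat.
rewrite Hmu.
have [x0 hx] : exists x0 : R[i], xt = 2 - x0 ^+ 2.
  by exists (sqrtC (2 - xt)); rewrite sqrtCK opprB addrC subrK.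
have [y0 hy] : exists y0 : R[i], yt = 2 - y0 ^+ 2.
  by exists (sqrtC (2 - yt)); rewrite sqrtCK opprB addrC subrK.
have [z0 hz] : exists z0 : R[i], zt = 2 - z0 ^+ 2.
  by exists (sqrtC (2 - zt)); rewrite sqrtCK opprB addrC subrK.
set S := 2 - (xt + yt + zt) + mu ^+ 2.
have HS : (x0 * y0 * z0) ^+ 2 = S ^+ 2.
  apply/esym/eqP; rewrite -subr_eq0; apply/eqP.
  rewrite /S -HM hx hy hz; ring.
have [e [He Hxyz]] := @sq_eq _ _ _ HS.
have HS' : (e * x0) * y0 * z0 = S.
  have -> : e * x0 * y0 * z0 = e * (x0 * y0 * z0) by ring.
  by rewrite Hxyz mulrA -expr2 He mul1r.
exists (e * x0), y0, z0; split.
  split.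
  - rewrite HS' /S hx hy hz exprMn He mul1r; ring.
  - by rewrite exprMn He mul1r.
  - done.
  - done.
move=> x' y' z' _ h1 h2 h3.
move: h1 h2 h3; rewrite hx hy hz => /addrI/oppr_inj h1 /addrI/oppr_inj h2 /addrI/oppr_inj h3.
have [e1 [E1 F1]] : exists e1 : R[i], e1 ^+ 2 = 1 /\ x' = e1 * (e * x0).
  by apply: sq_eq; rewrite exprMn He mul1r.
have [e2 [E2 F2]] := @sq_eq _ _ _ (esym h2).
have [e3 [E3 F3]] := @sq_eq _ _ _ (esym h3).
by exists e1, e2, e3.
Qed.
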